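(* Let $A\subset\mathbb{R}$, let $f_1,f_2:A\to\mathbb{R}$ be functions and let $a,\lambda,L_1,L_2\in\mathbb{R}$. Suppose $T_5\lim_{x\to a}f_1(x)=L_1$ and $T_5\lim_{x\to a}f_2(x)=L_2$. Then: 1. $T_5\lim_{x\to a}\left(f_1(x)+f_2(x)\right)=L_1+L_2$; 2. $T_5\lim_{x\to a}\left(f_1(x)f_2(x)\right)=L_1L_2$; 3. if $L_2\neq0$, then $T_5\lim_{x\to a}\frac{f_1(x)}{f_2(x)}=\frac{L_1}{L_2}$, where $f_1/f_2$ is considered on the set $\{x\in A: f_2(x)\neq0\}$; 4. $T_5\lim_{x\to a}\left(\lambda f_1(x)\right)=\lambda L_1$.
   Context: For $B\subset\mathbb{R}$, $f:B\to\mathbb{R}$ and $a,L\in\mathbb{R}$, $T_5\lim_{x\to a}f(x)=L$ means: for every real $\varepsilon>0$ there exists a real $\delta_\varepsilon>0$ such that the set $\left\{x\in\left((a-\delta_{\varepsilon},a+\delta_{\varepsilon})\setminus\{a\}\right)\cap B:\ |f(x)-L|\geq\varepsilon\right\}$ is countable (finite or countably infinite). *)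

(* Defs.v *)
From HB Require Import structures.
From mathcomp Require Import all_boot all_order all_algebra.
From mathcomp Require Import all_classical all_reals.
Set Implicit Arguments. Unset Strict Implicit. Unset Printing Implicit Defensive.
Import Order.TTheory GRing.Theory Num.Theory.
Local Open Scope classical_set_scope.
Local Open Scope ring_scope.

Definition T5lim (R : realType) (B : set R) (f : R -> R) (a L : R) : Prop :=
  forall eps : R, 0 < eps ->
    exists2 d : R, 0 < d &
      countable [set x | [/\ x \in `]a - d, a + d[, x != a, B x &
                             eps <= `|f x - L|]].

(* Main.v *)
Require Import Defs.
From HB Require Import structures.
From mathcomp Require Import all_boot all_order all_algebra.
From mathcomp Require Import all_classical all_reals.
From mathcomp Require Import lra ring.
Set Implicit Arguments. Unset Strict Implicit.
Import Order.TTheory GRing.Theory Num.Theory.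
Local Open Scope classical_set_scope.
Local Open Scope ring_scope.

Lemma countU2 T (S1 S2 : set T) : countable S1 -> countable S2 ->
  countable (S1 `|` S2).
Proof.
move=> c1 c2.
have -> : S1 `|` S2 = \bigcup_(b in [set: bool]) (if b then S1 else S2).
  apply/seteqP; split => x.
    by case=> h; [exists true|exists false].
  by case=> -[] _ h; [left|right].
apply: bigcup_countable; first exact: countableP.
by case.
Qed.

Lemma T5_one (R : realType) (B : set R) f a L (e : R) : T5lim B f a L -> 0 < e ->
  exists2 d : R, 0 < d & exists2 S : set R, countable S &
   forall d', d' <= d -> forall x, x \in `]a - d', a + d'[ -> x != a -> B x ->
     S x \/ `|f x - L| < e.
Proof.
move=> h he; case: (h e he) => d d0 cS.
exists d => //; eexists; first exact: cS.
move=> d' hd x; rewrite !in_itv /= => /andP[h1 h2] hxa hB.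
have hx : x \in `]a - d, a + d[ by rewrite in_itv /=; apply/andP; split; lra.
case: (lerP e `|f x - L|) => hl; [left|right] => //.
Qed.

Lemma T5_two (R : realType) (B : set R) f1 f2 a L1 L2 (e1 e2 : R) :
  T5lim B f1 a L1 -> T5lim B f2 a L2 -> 0 < e1 -> 0 < e2 ->
  exists2 d : R, 0 < d & exists2 S : set R, countable S &
   forall x, x \in `]a - d, a + d[ -> x != a -> B x ->
     S x \/ (`|f1 x - L1| < e1 /\ `|f2 x - L2| < e2).
Proof.
move=> h1 h2 he1 he2.
case: (T5_one h1 he1) => d1 d10 [S1 c1 H1].
case: (T5_one h2 he2) => d2 d20 [S2 c2 H2].
exists (Num.min d1 d2); first by rewrite lt_min d10.
exists (S1 `|` S2); first exact: countU2.
move=> x hx hxa hB.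
case: (H1 (Num.min d1 d2) (ltac:(by rewrite ge_min lexx)) x hx hxa hB) => [?|k1]; first by left; left.
case: (H2 (Num.min d1 d2) (ltac:(by rewrite ge_min lexx orbT)) x hx hxa hB) => [?|k2]; first by left; right.
by right.
Qed.

Lemma T5_close (R : realType) (B : set R) (g : R -> R) (a L eps d : R) (S : set R) :
  0 < d -> countable S ->
  (forall x, x \in `]a - d, a + d[ -> x != a -> B x -> S x \/ `|g x - L| < eps) ->
  exists2 d : R, 0 < d &
      countable [set x | [/\ x \in `]a - d, a + d[, x != a, B x &
                             eps <= `|g x - L|]].
Proof.
move=> d0 cS H; exists d => //.
apply: sub_countable cS; apply: subset_card_le => x [h1 h2 h3 h4].
case: (H x h1 h2 h3) => // k; move: h4; rewrite leNgt k.
by [].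
Qed.

Section Ops.
Variable R : realType.
Implicit Types (B : set R) (f g : R -> R) (a L : R).

Lemma T5_add B f g a L1 L2 : T5lim B f a L1 -> T5lim B g a L2 ->
  T5lim B (fun x => f x + g x) a (L1 + L2).
Proof.
move=> h1 h2 eps he.
have he2 : 0 < eps / 2 by lra.
case: (T5_two h1 h2 he2 he2) => d d0 [S cS H].
apply: (T5_close d0 cS) => x hx hxa hB.
case: (H x hx hxa hB) => [?|[k1 k2]]; [by left|right].
have := ler_normD (f x - L1) (g x - L2).
have -> : f x + g x - (L1 + L2) = (f x - L1) + (g x - L2) by ring.
lra.
Qed.

Lemma T5_cst B a c : T5lim B (fun _ => c) a c.
Proof.
move=> eps he.
apply: (@T5_close _ _ _ _ _ _ 1 set0 ltr01 (@countable0 R)).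
by move=> x _ _ _; right; rewrite subrr normr0.
Qed.

Lemma T5_mul B f g a L1 L2 : T5lim B f a L1 -> T5lim B g a L2 ->
  T5lim B (fun x => f x * g x) a (L1 * L2).
Proof.
move=> h1 h2 eps he.
set K := 1 + `|L1| + `|L2|.
have K0 : 0 < K by rewrite /K; have := normr_ge0 L1; have := normr_ge0 L2; lra.
set e := Num.min 1 (eps / K).
have e0 : 0 < e by rewrite lt_min ltr01 divr_gt0.
have e1 : e <= 1 by rewrite ge_min lexx.
have eK : e * K <= eps.
  have : e <= eps / K by rewrite ge_min lexx orbT.
  by move=> h; have := ler_wpM2r (ltW K0) h; rewrite divfK // gt_eqF.
case: (T5_two h1 h2 e0 e0) => d d0 [S cS H].
apply: (T5_close d0 cS) => x hx hxa hB.
case: (H x hx hxa hB) => [?|[k1 k2]]; [by left|right].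
set u := f x - L1; set v := g x - L2.
have -> : f x * g x - L1 * L2 = u * v + L1 * v + L2 * u by rewrite /u /v; ring.
have n1 := ler_normD (u * v + L1 * v) (L2 * u).
have n2 := ler_normD (u * v) (L1 * v).
rewrite !normrM in n1 n2.
have hu := normr_ge0 u; have hv := normr_ge0 v.
have hL1 := normr_ge0 L1; have hL2 := normr_ge0 L2.
have p1 : `|u| * `|v| < e by have := ler_wpM2l hu (ltW k2); nra.
have p2 : `|L1| * `|v| <= `|L1| * e by apply: ler_wpM2l => //; exact: ltW.
have p3 : `|L2| * `|u| <= `|L2| * e by apply: ler_wpM2l => //; exact: ltW.
rewrite /K in eK.
lra.
Qed.

Lemma T5_inv B f a L : L != 0 -> T5lim B f a L ->
  T5lim [set x | B x /\ f x != 0] (fun x => (f x)^-1) a L^-1.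
Proof.
move=> L0 h eps he.
have nL : 0 < `|L| by rewrite normr_gt0.
set e := Num.min (`|L| / 2) (eps * `|L| ^+ 2 / 2).
have e0 : 0 < e by rewrite lt_min; apply/andP; split;
  [apply: divr_gt0 | apply: divr_gt0; [apply: mulr_gt0 => //; apply: exprn_gt0|]].
have e1 : e <= `|L| / 2 by rewrite ge_min lexx.
have e2 : e <= eps * `|L| ^+ 2 / 2 by rewrite ge_min lexx orbT.
case: (T5_one h e0) => d d0 [S cS H].
apply: (T5_close d0 cS) => x hx hxa [hB fx0].
case: (H d (lexx _) x hx hxa hB) => [?|k]; [by left|right].
have nf : 0 < `|f x| by rewrite normr_gt0.
have -> : (f x)^-1 - L^-1 = (L - f x) / (f x * L) by field; apply/andP.
rewrite normrM normfV normrM ltr_pdivrMr; last exact: mulr_gt0.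
have t := ler_normD (f x - L) L.
have -> : `|L - f x| = `|f x - L| by rewrite distrC.
have fL : `|L| / 2 <= `|f x|.
  have := ler_normD (L - f x) (f x); rewrite distrC.
  have -> : L - f x + f x = L by ring.
  lra.
have : eps * `|L| ^+ 2 / 2 <= eps * (`|f x| * `|L|).
  have q : `|L| * (`|L|/2) <= `|L| * `|f x| by apply: ler_wpM2l; lra.
  nra.
lra.
Qed.

Lemma T5_sub B B' f a L : B' `<=` B -> T5lim B f a L -> T5lim B' f a L.
Proof.
move=> sB h eps he.
case: (T5_one h he) => d d0 [S cS H].
apply: (T5_close d0 cS) => x hx hxa hB.
exact: (H d (lexx _) x hx hxa (sB _ hB)).
Qed.

End Ops.

Theorem theorem4 (R : realType) (A : set R) (f1 f2 : R -> R)
    (a lambda L1 L2 : R) :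
  T5lim A f1 a L1 -> T5lim A f2 a L2 ->
  [/\ T5lim A (fun x => f1 x + f2 x) a (L1 + L2),
      T5lim A (fun x => f1 x * f2 x) a (L1 * L2),
      (L2 != 0 ->
         T5lim [set x | A x /\ f2 x != 0] (fun x => f1 x / f2 x) a (L1 / L2))
    & T5lim A (fun x => lambda * f1 x) a (lambda * L1)].
Proof.
move=> h1 h2; split.
- exact: T5_add.
- exact: T5_mul.
- move=> L0; apply: T5_mul; last exact: T5_inv.
  by apply: T5_sub h1 => x [].
- exact: (T5_mul (T5_cst _ _ _) h1).
Qed.
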